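(* Let $(X,\sigma)$ be an infinite mixing subshift of finite type (one-sided or two-sided), and let $x\in X$ be a periodic point with $\sigma^p(x)=x$, $p\in\mathbb N$. Then there is a dense Mycielski set $S\subset X$ with $x\in S$ and $\sigma^p(S)\subset S$ which is syndetically scrambled for $\sigma$.
   Context: A subshift is a nonempty closed $\sigma$-invariant subset $X$ of $\mathcal A^{\mathbb N_0}$ or $\mathcal A^{\mathbb Z}$ ($\mathcal A$ finite), with the shift $\sigma$. It is of finite type if $X$ consists of exactly the sequences containing no word from some fixed finite set of forbidden words. Mixing: for all nonempty open $U,V$, $\{n:\sigma^n(U)\cap V\neq\emptyset\}$ is cofinite. Syndetic: a subset of $\mathbb N$ meeting every set containing arbitrarily long runs of consecutive integers. $\mathrm{Asy}(\sigma)=\{(x,y):\lim_n d(\sigma^n x,\sigma^n y)=0\}$; $\mathrm{SProx}(\sigma)=\{(x,y):\{n:d(\sigma^nx,\sigma^ny)<\varepsilon\}$ syndetic for all $\varepsilon>0\}$. A set with at least two points is syndetically scrambled if all its pairs of distinct points lie in $\mathrm{SProx}\setminus\mathrm{Asy}$. Cantor set: nonempty compact perfect totally disconnected; Mycielski set: countable union of Cantor sets. *)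

(* Defs.v *)
(* Symbolic dynamics on A^I with I = nat (one-sided) or I = Z (two-sided). *)
From Stdlib Require Import Arith ZArith List.
Import ListNotations.
Set Implicit Arguments.

Section Generic.
(* Index type, the successor on indices (shift direction), and an increasing
   exhausting family of finite windows of indices.  For the product topology on
   A^I, the basic neighbourhoods of x are the sets {y | y agrees with x on win k}. *)
Variables (I : Type) (sh : I -> I) (win : nat -> I -> Prop) (A : Type).

Definition pt := I -> A.
Definition pset := pt -> Prop.

Definition shift (x : pt) : pt := fun i => x (sh i).
Definition shiftn (n : nat) (x : pt) : pt := Nat.iter n shift x.

Definition agree (k : nat) (x y : pt) : Prop := forall i, win k i -> x i = y i.

Definition is_open (U : pset) : Prop :=
  forall x, U x -> exists k, forall y, agree k x y -> U y.
Definition is_closed (K : pset) : Prop := is_open (fun y => ~ K y).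

Definition occurs (w : list A) (x : pt) (i : I) : Prop :=
  forall j a, nth_error w j = Some a -> x (Nat.iter j sh i) = a.

Definition is_subshift (X : pset) : Prop :=
  (exists x, X x) /\ is_closed X /\ (forall x, X x -> X (shift x)).

Definition is_SFT (X : pset) : Prop :=
  exists F : list (list A),
    forall x, X x <-> (forall w, In w F -> forall i, ~ occurs w x i).

Definition infinite_set (X : pset) : Prop :=
  forall l : list pt, exists x, X x /\ ~ In x l.

Definition mixing (X : pset) : Prop :=
  forall U V : pset, is_open U -> is_open V ->
    (exists u, X u /\ U u) -> (exists v, X v /\ V v) ->
    exists N, forall n, N <= n -> exists y, X y /\ U y /\ X (shiftn n y) /\ V (shiftn n y).

Definition dense_in (X S : pset) : Prop :=
  forall U, is_open U -> (exists u, X u /\ U u) -> exists s, S s /\ U s.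

Definition compact (K : pset) : Prop :=
  forall (J : Type) (U : J -> pset),
    (forall j, is_open (U j)) -> (forall y, K y -> exists j, U j y) ->
    exists l : list J, forall y, K y -> exists j, In j l /\ U j y.

Definition perfect (K : pset) : Prop :=
  forall x, K x -> forall U, is_open U -> U x -> exists y, K y /\ U y /\ y <> x.

Definition totally_disconnected (K : pset) : Prop :=
  forall C : pset, (forall y, C y -> K y) ->
  forall a b, C a -> C b -> a <> b ->
  exists U V, is_open U /\ is_open V /\ (forall y, C y -> U y \/ V y) /\
    (exists y, C y /\ U y) /\ (exists y, C y /\ V y) /\
    (forall y, C y -> U y -> V y -> False).

Definition cantor (K : pset) : Prop :=
  (exists y, K y) /\ compact K /\ perfect K /\ totally_disconnected K.

Definition mycielski (S : pset) : Prop :=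
  exists C : nat -> pset, (forall n, cantor (C n)) /\
    (forall y, S y <-> exists n, C n y).

End Generic.

Definition thick (T : nat -> Prop) : Prop :=
  forall L, exists m, forall j, j < L -> T (m + j).
Definition syndetic (Sy : nat -> Prop) : Prop :=
  forall T, thick T -> exists n, Sy n /\ T n.

Section Generic2.
Variables (I : Type) (sh : I -> I) (win : nat -> I -> Prop) (A : Type).

(* d(x,y) < 2^-k  is read as  "x and y agree on the window k" *)
Definition asymptotic (x y : pt I A) : Prop :=
  forall k, exists N, forall n, N <= n ->
    agree win k (shiftn sh n x) (shiftn sh n y).

Definition synd_proximal (x y : pt I A) : Prop :=
  forall k, syndetic (fun n => agree win k (shiftn sh n x) (shiftn sh n y)).

Definition synd_scrambled (S : pset I A) : Prop :=
  (exists a b, S a /\ S b /\ a <> b) /\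
  (forall a b, S a -> S b -> a <> b ->
     synd_proximal a b /\ ~ asymptotic a b).

End Generic2.

Definition thm4p7_for (I : Type) (sh : I -> I) (win : nat -> I -> Prop) : Prop :=
  forall (A' : Type), (exists l : list A', forall a, In a l) ->
  forall X : pset I A',
    is_subshift sh win X -> is_SFT sh X ->
    infinite_set X -> mixing sh win X ->
  forall (x : pt I A') (p : nat), X x -> 0 < p -> shiftn sh p x = x ->
  exists S : pset I A',
    (forall y, S y -> X y) /\ dense_in win X S /\ mycielski win S /\
    S x /\ (forall y, S y -> S (shiftn sh p y)) /\
    synd_scrambled sh win S.

Definition win1 (k i : nat) : Prop := i < k.
Definition win2 (k : nat) (i : Z) : Prop := (- Z.of_nat k < i < Z.of_nat k)%Z.

(* Main.v *)
Require Import Defs.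
From Stdlib Require Import Arith ZArith List Lia Classical ClassicalEpsilon FunctionalExtensionality Cantor.
Import ListNotations.

Lemma digits_exist : forall b (g : nat -> nat), (0 < b)%nat -> (forall e, (g e < b)%nat) ->
  forall K, exists c, (c < b ^ K)%nat /\ forall e, (e < K)%nat -> ((c / b ^ e) mod b)%nat = g e.
Proof.
  intros b g Hb Hg K. induction K as [|K IH].
  - exists 0%nat. simpl. split. lia. intros; lia.
  - destruct IH as (c & Hc & Hce). exists (c + g K * b ^ K)%nat. split.
    + rewrite Nat.pow_succ_r by lia. specialize (Hg K). nia.
    + intros e He. assert (Hbe : b ^ e <> 0%nat) by (apply Nat.pow_nonzero; lia).
      destruct (Nat.eq_dec e K) as [->|Hne].
      * rewrite Nat.div_add by auto. rewrite Nat.div_small by auto. simpl. apply Nat.mod_small. auto.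
      * replace (b ^ K)%nat with (b ^ (K - e - 1) * b * b ^ e)%nat.
        2:{ set (m := (K - e - 1)%nat). replace K with (m + 1 + e)%nat by (unfold m; lia).
            rewrite !Nat.pow_add_r, Nat.pow_1_r. auto. }
        rewrite Nat.mul_assoc. rewrite Nat.div_add by auto.
        rewrite Nat.mul_assoc. rewrite Nat.Div0.mod_add. apply Hce. lia.
Qed.

Section Gen.
Variables (I : Type) (sh : I -> I) (win : nat -> I -> Prop) (pos : I -> Z) (ofZ : Z -> I).
Hypothesis pos_sh : forall i, pos (sh i) = (pos i + 1)%Z.
Hypothesis ofZ_pos : forall i, ofZ (pos i) = i.
Hypothesis pos_ofZ : forall z, (0 <= z)%Z -> pos (ofZ z) = z.
Hypothesis win_iff : forall k i, win k i <-> (- Z.of_nat k < pos i < Z.of_nat k)%Z.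

Lemma pos_iter : forall n i, pos (Nat.iter n sh i) = (pos i + Z.of_nat n)%Z.
Proof. induction n; intros; simpl. lia. rewrite pos_sh, IHn. lia. Qed.

Lemma iter_ofZ : forall n i, Nat.iter n sh i = ofZ (pos i + Z.of_nat n).
Proof. intros. rewrite <- pos_iter, ofZ_pos. auto. Qed.

Lemma pos_inj : forall a b, pos a = pos b -> a = b.
Proof. intros. rewrite <- (ofZ_pos a), <- (ofZ_pos b), H. auto. Qed.

Lemma shiftn_eq : forall (A:Type) n (y : pt I A) i, shiftn sh n y i = y (Nat.iter n sh i).
Proof.
  induction n; intros. auto.
  change (shiftn sh (S n) y i) with (Defs.shift sh (shiftn sh n y) i). unfold Defs.shift. rewrite IHn.
  f_equal. apply pos_inj. rewrite pos_iter. simpl. rewrite !pos_sh, pos_iter. lia.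
Qed.

Lemma shiftn_ofZ : forall (A:Type) n (y : pt I A) i, shiftn sh n y i = y (ofZ (pos i + Z.of_nat n)).
Proof. intros. rewrite shiftn_eq, iter_ofZ. auto. Qed.


Section CantorSec.
Variables (A : Type) (Psi : (nat -> bool) -> pt I A).
Hypothesis Hcont : forall k, exists m, forall al al', (forall i, (i < m)%nat -> al i = al' i) ->
  agree win k (Psi al) (Psi al').
Hypothesis Hinj : forall al al', Psi al = Psi al' -> forall i, al i = al' i.

Definition upd (be : nat -> bool) (n : nat) (b : bool) : nat -> bool := fun i => if Nat.eqb i n then b else be i.

Lemma open_nbhd : forall (U : pset I A) (y : pt I A), is_open win U -> U y -> exists k, forall y', agree win k y y' -> U y'.
Proof. intros. apply H; auto. Qed.

Lemma cantor_img : cantor win (fun y => exists al, y = Psi al).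
Proof.
  split; [|split; [|split]].
  - exists (Psi (fun _ => false)). eauto.
  - intros J U HU Hcov. apply NNPP. intro Hno.
    set (NC := fun (be : nat -> bool) (n : nat) => ~ exists l : list J, forall al, (forall i, (i < n)%nat -> al i = be i) ->
          exists j, In j l /\ U j (Psi al)).
    assert (Step : forall be n, NC be n -> NC (upd be n false) (S n) \/ NC (upd be n true) (S n)).
    { intros be n Hbe. apply NNPP. intro Hn. apply Hbe.
      assert (H1 : ~ NC (upd be n false) (S n)) by (intro; apply Hn; auto).
      assert (H2 : ~ NC (upd be n true) (S n)) by (intro; apply Hn; auto).
      apply NNPP in H1. apply NNPP in H2. destruct H1 as [l1 H1]. destruct H2 as [l2 H2].
      exists (l1 ++ l2). intros al Hal.
      destruct (al n) eqn:En.
      - destruct (H2 al) as (j & Hj & Uj). intros i Hi. unfold upd. destruct (Nat.eqb_spec i n). subst; auto. apply Hal. lia.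
        exists j. split; auto. apply in_or_app. auto.
      - destruct (H1 al) as (j & Hj & Uj). intros i Hi. unfold upd. destruct (Nat.eqb_spec i n). subst; auto. apply Hal. lia.
        exists j. split; auto. apply in_or_app. auto. }
    set (pre := fix pre (n : nat) : nat -> bool := match n with
      | O => fun _ => false
      | S n' => upd (pre n') n' (if excluded_middle_informative (NC (upd (pre n') n' false) (S n')) then false else true)
      end).
    assert (Inv : forall n, NC (pre n) n).
    { induction n.
      - intros (l & Hl). apply Hno. exists l. intros y (al & ->). apply Hl. intros; lia.
      - simpl. destruct (excluded_middle_informative (NC (upd (pre n) n false) (S n))); auto.
        destruct (Step _ _ IHn); auto. contradiction. }
    assert (Stab : forall n i, (i < n)%nat -> pre (S n) i = pre n i).
    { intros. simpl. unfold upd. destruct (Nat.eqb_spec i n). lia. auto. }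
    assert (Stab2 : forall n i, (i < n)%nat -> pre n i = pre (S i) i).
    { induction n; intros. lia. destruct (Nat.eq_dec i n). subst; auto. rewrite Stab by lia. apply IHn. lia. }
    set (ast := fun i => pre (S i) i).
    destruct (Hcov (Psi ast)) as [j Hj]. eauto.
    destruct (HU j (Psi ast) Hj) as [k Hk].
    destruct (Hcont k) as [m Hm].
    apply (Inv m). exists [j]. intros al Hal. exists j. split. left; auto.
    apply Hk. apply Hm. intros i Hi. unfold ast. rewrite Hal by auto. symmetry. apply Stab2. auto.
  - intros y (al & ->) U HU HUy. destruct (HU _ HUy) as [k Hk]. destruct (Hcont k) as [m Hm].
    exists (Psi (upd al m (negb (al m)))). split. eauto. split.
    + apply Hk. apply Hm. intros. unfold upd. destruct (Nat.eqb_spec i m). lia. auto.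
    + intro He. pose proof (Hinj _ _ He m). unfold upd in H. rewrite Nat.eqb_refl in H. destruct (al m); discriminate.
  - intros C HC a b Ca Cb Hab.
    assert (exists i, a i <> b i) as [i Hi].
    { apply NNPP. intro Hn. apply Hab. apply functional_extensionality. intros i. apply NNPP. intro. apply Hn. eauto. }
    assert (Hk : win (S (Z.to_nat (Z.abs (pos i)))) i) by (apply win_iff; lia).
    exists (fun y => y i = a i), (fun y => y i <> a i). split; [|split; [|split; [|split; [|split]]]].
    + intros y Hy. exists (S (Z.to_nat (Z.abs (pos i)))). intros y' Hyy'. rewrite <- Hyy'; auto.
    + intros y Hy. exists (S (Z.to_nat (Z.abs (pos i)))). intros y' Hyy'. rewrite <- Hyy'; auto.
    + intros y _. destruct (classic (y i = a i)); auto.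
    + exists a. auto.
    + exists b. auto.
    + intros y _ H1 H2. auto.
Qed.
End CantorSec.

Section WithA.
Variables (A : Type) (X : pset I A) (F : list (list A)).
Hypothesis HF : forall y, X y <-> (forall w, In w F -> forall i, ~ occurs sh w y i).

Definition M : nat := S (fold_right (fun w m => max (length w) m) 0 F).
Lemma lenF_gen : forall (l : list (list A)) w, In w l -> (length w < S (fold_right (fun w m => max (length w) m) 0 l))%nat.
Proof.
  induction l as [|w0 F' IH]; simpl; intros w Hw. contradiction.
  destruct Hw as [<-|Hw]. lia. specialize (IH w Hw). lia.
Qed.
Lemma lenF : forall w, In w F -> (length w < M)%nat.
Proof. apply lenF_gen. Qed.

Definition W (f : Z -> A) (c : Z) : Prop :=
  exists u i', X u /\ forall r, (r < M)%nat -> f (c + Z.of_nat r)%Z = u (Nat.iter r sh i').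

Definition ptc (f : Z -> A) : pt I A := fun i => f (pos i).
Definition cfg (u : pt I A) : Z -> A := fun z => u (ofZ z).

Lemma ptc_X : forall f, (forall i, W f (pos i)) -> X (ptc f).
Proof.
  intros f H. apply HF. intros w Hw i Hocc.
  destruct (H i) as (u & i' & Xu & Hu).
  apply (proj1 (HF u) Xu w Hw i'). intros j a Hj.
  assert (j < length w)%nat. { apply nth_error_Some. rewrite Hj. discriminate. }
  pose proof (lenF w Hw).
  rewrite <- Hu by lia. rewrite <- (Hocc j a Hj). unfold ptc. rewrite pos_iter. auto.
Qed.

Lemma W_cfg : forall u i, X u -> W (cfg u) (pos i).
Proof. intros. exists u, i. split; auto. intros. unfold cfg. rewrite iter_ofZ. auto. Qed.

Lemma W_cfg0 : forall u c, X u -> (0 <= c)%Z -> W (cfg u) c.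
Proof. intros. rewrite <- (pos_ofZ c) by auto. apply W_cfg; auto. Qed.

Lemma W_ext : forall f g c, W f c -> (forall r, (r < M)%nat -> f (c + Z.of_nat r)%Z = g (c + Z.of_nat r)%Z) -> W g c.
Proof. intros f g c (u & i' & Xu & Hu) H. exists u, i'. split; auto. intros. rewrite <- H; auto. Qed.

Lemma W_tr : forall f c t, W f (c - t)%Z -> W (fun z => f (z - t)%Z) c.
Proof. intros f c t (u & i' & Xu & Hu). exists u, i'. split; auto. intros. rewrite <- Hu; auto. f_equal. lia. Qed.

Definition glue (f g : Z -> A) (a : Z) : Z -> A := fun z => if (z <? a)%Z then f z else g z.

Lemma glue_l : forall f g a z, (z < a)%Z -> glue f g a z = f z.
Proof. intros. unfold glue. destruct (Z.ltb_spec z a); auto; lia. Qed.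
Lemma glue_r : forall f g a z, (a <= z)%Z -> glue f g a z = g z.
Proof. intros. unfold glue. destruct (Z.ltb_spec z a); auto; lia. Qed.

Lemma W_glue_l : forall f g a c, (c < a)%Z -> W f c ->
  (forall z, (a <= z < a + Z.of_nat M)%Z -> f z = g z) -> W (glue f g a) c.
Proof.
  intros. apply (W_ext f); auto. intros. unfold glue.
  destruct (Z.ltb_spec (c + Z.of_nat r) a); auto. apply H1. lia.
Qed.

Lemma W_glue_r : forall f g a c, (a <= c)%Z -> W g c -> W (glue f g a) c.
Proof. intros. apply (W_ext g); auto. intros. rewrite glue_r; auto. lia. Qed.

Lemma W_glue : forall f g a c, W f c -> W g c ->
  (forall z, (a <= z < a + Z.of_nat M)%Z -> f z = g z) -> W (glue f g a) c.
Proof. intros. destruct (Z.lt_ge_cases c a). apply W_glue_l; auto. apply W_glue_r; auto. Qed.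

Section Per.
Variables (x : pt I A) (p : nat).
Hypothesis Xx : X x.
Hypothesis Hp : (0 < p)%nat.
Hypothesis Hper : shiftn sh p x = x.
Let P := Z.of_nat p.

Lemma xper_iter : forall m i, x (Nat.iter (m * p) sh i) = x i.
Proof.
  induction m; intros. auto. simpl Nat.mul. rewrite Nat.iter_add.
  rewrite <- shiftn_eq, Hper. auto.
Qed.

Lemma xperZ : forall m i, x (ofZ (pos i + Z.of_nat m * P)) = x i.
Proof.
  intros. rewrite <- (xper_iter m i). rewrite iter_ofZ. f_equal. f_equal. unfold P. lia.
Qed.

Lemma P_pos : (0 < P)%Z.
Proof. unfold P. lia. Qed.

Definition xf (z : Z) : A := x (ofZ (z mod P)).

Lemma x_xf : forall i, x i = xf (pos i).
Proof.
  intros. unfold xf. pose proof (Z_div_mod_eq_full (pos i) P). pose proof (Z.mod_pos_bound (pos i) P P_pos).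
  set (q := (pos i / P)%Z) in *. set (r := (pos i mod P)%Z) in *.
  destruct (Z.le_gt_cases 0 q).
  - rewrite <- (xperZ (Z.to_nat q) (ofZ r)). f_equal. rewrite pos_ofZ by lia.
    rewrite <- (ofZ_pos i). f_equal. lia.
  - rewrite <- (xperZ (Z.to_nat (- q)) i). f_equal. f_equal. lia.
Qed.

Lemma xf_mod : forall z, xf z = xf (z mod P).
Proof. intros. unfold xf. rewrite Zmod_mod. auto. Qed.

Lemma xf_per : forall z m, xf (z + m * P)%Z = xf z.
Proof. intros. unfold xf. rewrite Z_mod_plus_full. auto. Qed.

Lemma xf_per' : forall z m, xf (z + Z.of_nat m * P)%Z = xf z.
Proof. intros. apply xf_per. Qed.

Lemma W_xf : forall c, W xf c.
Proof.
  intros. exists x, (ofZ (c mod P)). split; auto. intros.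
  pose proof (Z.mod_pos_bound c P P_pos).
  rewrite x_xf, pos_iter, pos_ofZ by lia.
  rewrite xf_mod. rewrite (xf_mod (c mod P + _)). rewrite Zplus_mod_idemp_l. auto.
Qed.

Lemma ptc_xf : ptc xf = x.
Proof. apply functional_extensionality. intros. unfold ptc. rewrite x_xf. auto. Qed.


Lemma agree_open : forall k (a : pt I A), is_open win (fun y => agree win k a y).
Proof. intros k a y Hy. exists k. intros y' Hyy' i Hi. rewrite Hy by auto. apply Hyy'. auto. Qed.

Hypothesis Hmix : mixing sh win X.

Lemma bridge : forall v w, X v -> X w -> forall K N0, exists m, (N0 <= m)%nat /\ exists y, X y /\ agree win K v y /\ agree win K w (shiftn sh (m*p) y).
Proof.
  intros v w Xv Xw K N0.
  destruct (Hmix (fun y => agree win K v y) (fun y => agree win K w y) (agree_open K v) (agree_open K w))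
    as [N HN].
  exists v. split; auto. intros i _; auto.
  exists w. split; auto. intros i _; auto.
  exists (N + N0)%nat. split. lia.
  destruct (HN ((N + N0) * p)%nat) as (y & Xy & U1 & _ & V1). nia.
  exists y. auto.
Qed.

Lemma agree_cfg : forall K v y, agree win K v y -> forall z, (0 <= z < Z.of_nat K)%Z -> cfg y z = cfg v z.
Proof.
  intros. unfold cfg. symmetry. apply H. apply win_iff. rewrite pos_ofZ; lia.
Qed.

Lemma agree_shift_cfg : forall K w y n, agree win K w (shiftn sh n y) ->
  forall r, (0 <= r < Z.of_nat K)%Z -> cfg y (r + Z.of_nat n) = cfg w r.
Proof.
  intros. unfold cfg. rewrite (H (ofZ r)). rewrite shiftn_ofZ, pos_ofZ by lia. auto.
  apply win_iff. rewrite pos_ofZ; lia.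
Qed.

Lemma cfg_x : forall z, (0 <= z)%Z -> cfg x z = xf z.
Proof. intros. unfold cfg. rewrite x_xf, pos_ofZ; auto. Qed.

Lemma least_ex : forall (Q : nat -> Prop) n, Q n -> exists q, Q q /\ forall q', (q' < q)%nat -> ~ Q q'.
Proof.
  intros Q n. induction n as [n IH] using (well_founded_induction lt_wf). intros Hn.
  destruct (classic (exists q', (q' < n)%nat /\ Q q')) as [(q' & Hq' & HQ)|Hno].
  - apply (IH q'); auto.
  - exists n. split; auto. intros q' Hq' HQ. apply Hno. eauto.
Qed.

Hypothesis Hinf : infinite_set X.

Lemma marker_exists : exists (B : Z -> A) (Lm : nat) (q : Z),
  (forall c, W B c) /\ (forall z, (z < Z.of_nat M)%Z -> B z = xf z) /\ (forall z, (Z.of_nat (Lm * p) <= z)%Z -> B z = xf z) /\ (0 <= q < Z.of_nat (Lm * p))%Z /\ B q <> xf q /\ (forall z, (z < q)%Z -> B z = xf z).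
Proof.
  destruct (Hinf [x]) as (w & Xw & Hw).
  assert (Hwx : exists i0, w i0 <> x i0).
  { apply NNPP. intro Hn. apply Hw. left. apply functional_extensionality. intro i.
    apply NNPP. intro H. apply Hn. exists i. auto. }
  destruct Hwx as [i0 Hi0].
  set (d := pos i0).
  set (K := (M + Z.to_nat (Z.abs d) + 1)%nat).
  destruct (bridge x w Xx Xw K K) as (m1 & Hm1 & y1 & Xy1 & A1 & A1').
  destruct (bridge w x Xw Xx K K) as (m2 & Hm2 & y2 & Xy2 & A2 & A2').
  set (n1 := Z.of_nat (m1 * p)). set (n2 := Z.of_nat (m2 * p)).
  assert (Hn1 : (Z.of_nat K <= n1)%Z) by (unfold n1; nia).
  assert (Hn2 : (Z.of_nat K <= n2)%Z) by (unfold n2; nia).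
  assert (HKM : (Z.of_nat M < Z.of_nat K)%Z) by (unfold K; lia).
  assert (HKd : (Z.abs d < Z.of_nat K)%Z) by (unfold K; lia).
  set (B1 := glue xf (cfg y1) 0).
  set (B2 := glue B1 (fun z => cfg y2 (z - n1)%Z) n1).
  set (B := glue B2 xf (n1 + n2)).
  assert (Hy1x : forall z, (0 <= z < Z.of_nat K)%Z -> cfg y1 z = xf z).
  { intros. rewrite (agree_cfg K x y1 A1) by auto. apply cfg_x. lia. }
  assert (WB : forall c, W B c).
  { intros c.
    assert (WB1 : forall c, W B1 c).
    { intros c'. destruct (Z.lt_ge_cases c' 0).
      - apply W_glue_l; auto. apply W_xf. intros. rewrite Hy1x; auto. lia.
      - apply W_glue_r; auto. apply W_cfg0; auto. }
    assert (WB2 : forall c, W B2 c).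
    { intros c'. destruct (Z.lt_ge_cases c' n1).
      - apply W_glue_l; auto. intros z Hz. unfold B1. rewrite glue_r by lia.
        replace z with ((z - n1) + Z.of_nat (m1 * p))%Z at 1 by (unfold n1; lia).
        rewrite (agree_shift_cfg K w y1 _ A1') by lia.
        rewrite (agree_cfg K w y2 A2) by lia. auto.
      - apply W_glue_r; auto. apply W_tr. apply W_cfg0; auto. lia. }
    destruct (Z.lt_ge_cases c (n1 + n2)).
    - apply W_glue_l; auto. intros z Hz. unfold B2. rewrite glue_r by lia.
      replace (z - n1)%Z with ((z - n1 - n2) + Z.of_nat (m2 * p))%Z by (unfold n2; lia).
      rewrite (agree_shift_cfg K x y2 _ A2') by lia. rewrite cfg_x by lia.
      replace z with ((z - n1 - n2) + Z.of_nat (m1 + m2) * P)%Z at 2 by (unfold n1, n2, P; lia).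
      rewrite xf_per. auto.
    - apply W_glue_r; auto. apply W_xf. }
  assert (Hlow : forall z, (z < Z.of_nat M)%Z -> B z = xf z).
  { intros. unfold B, B2, B1. rewrite glue_l by lia. rewrite glue_l by lia.
    destruct (Z.lt_ge_cases z 0). rewrite glue_l; auto. rewrite glue_r by lia. apply Hy1x. lia. }
  assert (Hhigh : forall z, (Z.of_nat ((m1 + m2) * p) <= z)%Z -> B z = xf z).
  { intros. unfold B. rewrite glue_r; auto. unfold n1, n2. lia. }
  set (z0 := (n1 + d)%Z).
  assert (Hz0 : B z0 <> xf z0).
  { assert (xf z0 = x i0).
    { unfold z0. replace (n1 + d)%Z with (d + Z.of_nat m1 * P)%Z by (unfold n1, P; lia).
      rewrite xf_per. rewrite x_xf. auto. }
    rewrite H. intro HB. apply Hi0. rewrite <- HB.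
    assert (Hwin : win K i0). { apply win_iff. fold d. lia. }
    destruct (Z.lt_ge_cases d 0).
    - unfold B, B2. rewrite glue_l by lia. rewrite glue_l by lia. unfold B1. rewrite glue_r by lia.
      rewrite (A1' i0 Hwin). rewrite shiftn_ofZ. unfold cfg. f_equal. f_equal. unfold z0, n1. fold d. lia.
    - unfold B, B2. rewrite glue_l by lia. rewrite glue_r by lia.
      replace (z0 - n1)%Z with d by (unfold z0; lia). unfold cfg. rewrite (A2 i0 Hwin).
      unfold d. rewrite ofZ_pos. auto. }
  destruct (least_ex (fun n => B (Z.of_nat n) <> xf (Z.of_nat n)) (Z.to_nat z0)) as (qn & Hq1 & Hq2).
  { rewrite Z2Nat.id; auto. unfold z0. lia. }
  exists B, (m1 + m2)%nat, (Z.of_nat qn). split; auto. split; auto. split; auto. split; [|split; auto].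
  - split. lia. destruct (Z.lt_ge_cases (Z.of_nat qn) (Z.of_nat ((m1 + m2) * p))); auto.
    exfalso. apply Hq1. apply Hhigh. auto.
  - intros z Hz. destruct (Z.lt_ge_cases z 0). apply Hlow. lia.
    apply NNPP. intro Hn. apply (Hq2 (Z.to_nat z)). lia. rewrite Z2Nat.id; auto.
Qed.


Lemma prefix_exists : forall v (k : nat), X v -> exists (Pr : Z -> A) (c : Z),
  (forall i, W Pr (pos i)) /\ (forall z, (c <= z)%Z -> Pr z = xf z) /\ (Z.of_nat k <= c)%Z /\
  (forall i, win k i -> Pr (pos i) = v i).
Proof.
  intros v k Xv. set (K := (k + M)%nat).
  destruct (bridge v x Xv Xx K K) as (m & Hm & y & Xy & A1 & A2).
  set (n := Z.of_nat (m * p)).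
  assert (Hn : (Z.of_nat K <= n)%Z) by (unfold n; nia).
  set (P1 := glue (cfg v) (cfg y) 0).
  exists (glue P1 xf n), n. split; [|split; [|split]].
  - intros i. destruct (Z.lt_ge_cases (pos i) n).
    + apply W_glue_l; auto.
      * destruct (Z.lt_ge_cases (pos i) 0).
        -- apply W_glue_l; auto. apply W_cfg; auto. intros z Hz. symmetry. apply (agree_cfg K); auto. unfold K; lia.
        -- apply W_glue_r; auto. apply W_cfg; auto.
      * intros z Hz. unfold P1. rewrite glue_r by lia.
        replace z with ((z - n) + Z.of_nat (m * p))%Z at 1 by (unfold n; lia).
        rewrite (agree_shift_cfg K x y _ A2) by (unfold K in *; lia).
        rewrite cfg_x by lia. replace z with ((z - n) + Z.of_nat m * P)%Z at 2 by (unfold n, P; lia).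
        rewrite xf_per. auto.
    + apply W_glue_r; auto. apply W_xf.
  - intros. apply glue_r. auto.
  - unfold K in Hn. lia.
  - intros i Hi. pose proof Hi as Hi'. apply win_iff in Hi'. rewrite glue_l by (unfold K in Hn; lia).
    unfold P1, glue. destruct (pos i <? 0)%Z; unfold cfg; rewrite ofZ_pos; auto.
    symmetry. apply A1. apply win_iff. unfold K. lia.
Qed.

Lemma xf_perZ : forall z k, xf (z + k * P)%Z = xf z.
Proof. intros. apply xf_per. Qed.
Lemma xf_subZ : forall z k, xf (z - k * P)%Z = xf z.
Proof. intros. replace z with ((z - k * P) + k * P)%Z at 2 by lia. rewrite xf_perZ. auto. Qed.

Section Blocks.
Variables (B : Z -> A) (Lm : nat) (q : Z).
Hypothesis BW : forall c, W B c.
Hypothesis Blo : forall z, (z < Z.of_nat M)%Z -> B z = xf z.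
Hypothesis Bhi : forall z, (Z.of_nat (Lm * p) <= z)%Z -> B z = xf z.
Hypothesis Hq : (0 <= q < Z.of_nat (Lm * p))%Z.
Hypothesis Bq : B q <> xf q.
Hypothesis Bbq : forall z, (z < q)%Z -> B z = xf z.

Definition L0 : Z := Z.of_nat (Lm * p).
Definition H : Z := (L0 + P)%Z.
Definition Lam : Z := (H + P + L0)%Z.
Definition E : Z := (Lam + 1)%Z.
Definition bP (b : bool) : Z := if b then P else 0%Z.

Lemma L0_eq : L0 = (Z.of_nat Lm * P)%Z.
Proof. unfold L0, P. lia. Qed.

Definition D (t : Z) (b : bool) : Z -> A :=
  glue (fun z => B (z - t)%Z) (fun z => B (z - t - H - bP b)%Z) (t + H).

Lemma B_sh : forall z k, (Z.of_nat Lm * P <= z - k * P)%Z -> B (z - k * P)%Z = xf z.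
Proof. intros. rewrite Bhi by (rewrite Nat2Z.inj_mul; fold P; lia).
  replace z with ((z - k * P) + k * P)%Z at 2 by lia. rewrite xf_perZ. auto. Qed.

Lemma Bxf_sh : forall z k, (z - k * P < q)%Z -> B (z - k * P)%Z = xf z.
Proof. intros. rewrite Bbq by lia.
  replace z with ((z - k * P) + k * P)%Z at 2 by lia. rewrite xf_perZ. auto. Qed.

Lemma bP_eq : forall b, bP b = ((if b then 1 else 0) * P)%Z.
Proof. destruct b; unfold bP; ring. Qed.

Lemma Hpos : (0 < P)%Z. Proof. apply P_pos. Qed.
Lemma L0_pos : (0 < L0)%Z. Proof. unfold L0 in *. lia. Qed.
Section T.
Variables (tm : Z) (b : bool).
Let t := (tm * P)%Z.

Lemma D_W : forall c, W (D t b) c.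
Proof.
  intros c. unfold D. destruct (Z.lt_ge_cases c (t + H)).
  - apply W_glue_l; auto. apply W_tr. auto.
    intros z Hz. rewrite bP_eq. unfold H, t in *. rewrite L0_eq in *.
    replace (z - tm * P)%Z with (z - tm * P)%Z by lia.
    rewrite (B_sh z tm) by lia.
    replace (z - tm * P - (Z.of_nat Lm * P + P) - (if b then 1 else 0) * P)%Z
      with (z - (tm + Z.of_nat Lm + 1 + (if b then 1 else 0)) * P)%Z by lia.
    rewrite Blo. 2:{ destruct b; lia. }
    rewrite xf_subZ. auto.
  - apply W_glue_r; auto.
    replace (fun z => B (z - t - H - bP b)%Z) with (fun z => B (z - (t + H + bP b))%Z).
    apply W_tr. auto. apply functional_extensionality. intros. f_equal. lia.
Qed.


Lemma D_lo : forall z, (z < t + q)%Z -> D t b z = xf z.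
Proof.
  intros. unfold D. pose proof Hpos. rewrite glue_l by (unfold H, L0 in *; lia).
  apply (Bxf_sh z tm). unfold t in *. lia.
Qed.

Lemma D_q : D t b (t + q)%Z <> xf (t + q)%Z.
Proof.
  unfold D. pose proof Hpos. rewrite glue_l by (unfold H, L0 in *; lia).
  replace (t + q - t)%Z with q by lia. unfold t. rewrite Z.add_comm. rewrite xf_perZ. auto.
Qed.

Lemma D_mid : forall z, (t + L0 <= z < t + H + bP b + q)%Z -> D t b z = xf z.
Proof.
  intros. unfold D. destruct (Z.lt_ge_cases z (t + H)).
  - rewrite glue_l by lia. apply (B_sh z tm). unfold t in *. rewrite <- L0_eq. lia.
  - rewrite glue_r by lia. rewrite bP_eq. unfold H in *. unfold t in *.
    replace (z - tm * P - (L0 + P) - (if b then 1 else 0) * P)%Z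
      with (z - (tm + Z.of_nat Lm + 1 + (if b then 1 else 0)) * P)%Z by (rewrite L0_eq; lia).
    apply Bxf_sh. rewrite bP_eq in *. rewrite L0_eq in *. destruct b; lia.
Qed.

Lemma D_q2 : D t b (t + H + bP b + q)%Z <> xf (t + H + bP b + q)%Z.
Proof.
  unfold D. pose proof Hpos. rewrite glue_r by (destruct b; simpl; lia).
  replace (t + H + bP b + q - t - H - bP b)%Z with q by lia.
  rewrite bP_eq. unfold H, t. rewrite L0_eq.
  replace (tm * P + (Z.of_nat Lm * P + P) + (if b then 1 else 0) * P + q)%Z
    with (q + (tm + Z.of_nat Lm + 1 + (if b then 1 else 0)) * P)%Z by lia.
  rewrite xf_perZ. auto.
Qed.

Lemma D_hi : forall z, (t + Lam <= z)%Z -> D t b z = xf z.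
Proof.
  intros. unfold D. pose proof Hpos. pose proof L0_pos. unfold Lam in *. rewrite glue_r by lia.
  rewrite bP_eq. unfold H in *. unfold t in *.
  replace (z - tm * P - (L0 + P) - (if b then 1 else 0) * P)%Z
    with (z - (tm + Z.of_nat Lm + 1 + (if b then 1 else 0)) * P)%Z by (rewrite L0_eq; lia).
  apply B_sh. rewrite L0_eq in *. destruct b; lia.
Qed.

Lemma D_out : forall z, (z < t \/ t + Lam <= z)%Z -> D t b z = xf z.
Proof. intros z [Hz|Hz]. apply D_lo. lia. apply D_hi. auto. Qed.

End T.

Lemma E_pos : (1 <= E)%Z.
Proof. pose proof L0_pos. pose proof Hpos. unfold E, Lam, H. lia. Qed.

Definition G : nat := (Z.to_nat E + M + 1)%nat.
Definition tmn (n : nat) : Z := (Z.of_nat G * Z.of_nat n * Z.of_nat n)%Z.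
Definition tn (n : nat) : Z := (tmn n * P)%Z.

Lemma G_ge : (E + Z.of_nat M + 1 <= Z.of_nat G)%Z.
Proof. pose proof E_pos. unfold G. lia. Qed.

Lemma tn_ge : forall n, (Z.of_nat n <= tn n)%Z.
Proof. intros. pose proof G_ge. pose proof E_pos. pose proof Hpos. unfold tn, tmn.
  assert (Z.of_nat n <= Z.of_nat n * Z.of_nat n)%Z by nia.
  assert (1 <= Z.of_nat G * P)%Z by nia.
  replace (Z.of_nat G * Z.of_nat n * Z.of_nat n * P)%Z with ((Z.of_nat G * P) * (Z.of_nat n * Z.of_nat n))%Z by ring.
  nia. Qed.

Lemma G_mul : forall a, (0 <= a)%Z -> (a <= Z.of_nat G * a)%Z.
Proof. intros. pose proof G_ge. pose proof E_pos. nia. Qed.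

Lemma tn_nn : forall n, (0 <= tn n)%Z.
Proof. intros. pose proof (tn_ge n). lia. Qed.

Lemma tn_S : forall n, (tn n + Z.of_nat G * (2 * Z.of_nat n + 1) <= tn (S n))%Z.
Proof. intros. pose proof G_ge. pose proof E_pos. pose proof Hpos. unfold tn, tmn. rewrite Nat2Z.inj_succ. nia. Qed.

Lemma tn_lt : forall n m, (n < m)%nat -> (tn n + Z.of_nat G * (2 * Z.of_nat n + 1) <= tn m)%Z.
Proof.
  intros n m Hnm. induction Hnm. apply tn_S.
  pose proof (tn_S m). pose proof G_ge. pose proof E_pos. nia.
Qed.

Lemma tn_lt' : forall n m, (n < m)%nat -> (tn n + E + Z.of_nat M + 1 <= tn m)%Z.
Proof. intros. pose proof (tn_lt n m H0). pose proof G_ge. pose proof E_pos. nia. Qed.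

Lemma tn_le : forall n m, (n <= m)%nat -> (tn n <= tn m)%Z.
Proof. intros. destruct (Nat.eq_dec n m). subst; lia. pose proof (tn_lt' n m). pose proof E_pos. lia. Qed.

Fixpoint srch (z : Z) (fuel m : nat) : nat :=
  match fuel with O => m | S f => if (z <? tn m + E)%Z then m else srch z f (S m) end.

Definition nidx (z : Z) : nat := srch z (S (Z.to_nat z)) 0.

Lemma srch_spec : forall z fuel m, (forall m', (m' < m)%nat -> (tn m' + E <= z)%Z) ->
  (Z.to_nat z < m + fuel)%nat ->
  (z < tn (srch z fuel m) + E)%Z /\ (forall m', (m' < srch z fuel m)%nat -> (tn m' + E <= z)%Z).
Proof.
  intros z fuel. induction fuel; intros m Hm Hf; simpl.
  - split; auto. pose proof (tn_ge m). pose proof E_pos. lia.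
  - destruct (Z.ltb_spec z (tn m + E)). split; auto.
    apply IHfuel. intros m' Hm'. destruct (Nat.eq_dec m' m). subst; auto. apply Hm. lia. lia.
Qed.

Lemma nidx_spec : forall z, (z < tn (nidx z) + E)%Z /\ (forall m', (m' < nidx z)%nat -> (tn m' + E <= z)%Z).
Proof. intros. apply srch_spec. intros; lia. lia. Qed.

Lemma nidx_eq : forall z n, (forall m, (m < n)%nat -> (tn m + E <= z)%Z) -> (z < tn n + E)%Z -> nidx z = n.
Proof.
  intros z n H1 H2. destruct (nidx_spec z) as [S1 S2].
  destruct (lt_eq_lt_dec (nidx z) n) as [[Hl|Hl]|Hl]; auto.
  - specialize (H1 _ Hl). lia.
  - specialize (S2 _ Hl). lia.
Qed.

Lemma nidx_le : forall z, (Z.of_nat (nidx z) <= Z.max 0 z)%Z.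
Proof.
  intros. destruct (nidx_spec z) as [S1 S2]. destruct (nidx z) eqn:Hn. lia.
  specialize (S2 n ltac:(lia)). pose proof (tn_ge n). pose proof E_pos. lia.
Qed.

Section Body.
Variables (act bit : nat -> bool).

Definition Gn (n : nat) : Z -> A := fun z => if act n then D (tn n) (bit n) z else xf z.
Definition Body : Z -> A := fun z => Gn (nidx z) z.

Lemma Gn_out : forall n z, (z < tn n \/ tn n + Lam <= z)%Z -> Gn n z = xf z.
Proof. intros. unfold Gn. destruct (act n); auto. apply D_out. unfold tn in *. auto. Qed.

Lemma Gn_W : forall n c, W (Gn n) c.
Proof. intros. unfold Gn. destruct (act n). apply D_W. apply W_xf. Qed.

Lemma Body_W : forall c, W Body c.
Proof.
  intros c. apply (W_ext (Gn (nidx c))). apply Gn_W.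
  intros r Hr. unfold Body. set (n := nidx c). destruct (nidx_spec c) as [S1 S2].
  destruct (nidx_spec (c + Z.of_nat r)) as [T1 T2].
  destruct (lt_eq_lt_dec (nidx (c + Z.of_nat r)) n) as [[Hl|Hl]|Hl].
  - specialize (S2 _ Hl). lia.
  - rewrite Hl; auto.
  - specialize (T2 _ Hl). rewrite Gn_out by (unfold E in *; lia).
    rewrite Gn_out; auto. left. pose proof (tn_lt' n (nidx (c + Z.of_nat r)) Hl). unfold n in *. lia.
Qed.

Lemma Body_local : forall (n : nat) z, (n = 0%nat \/ (tn (n - 1) + Lam <= z)%Z) -> (z < tn (S n))%Z -> Body z = Gn n z.
Proof.
  intros n z H1 H2. pose proof E_pos. unfold Body. destruct (nidx_spec z) as [S1 S2]. set (k := nidx z) in *.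
  destruct (lt_eq_lt_dec k n) as [[Hl|Hl]|Hl].
  - destruct H1 as [H1|H1]. lia.
    rewrite Gn_out. rewrite Gn_out; auto. left. pose proof (tn_lt' k n Hl). lia.
    right. pose proof (tn_le k (n - 1) ltac:(lia)). lia.
  - subst; auto.
  - destruct (Nat.eq_dec k (S n)).
    + specialize (S2 n ltac:(lia)). rewrite Gn_out. rewrite Gn_out; auto. right. unfold E in *. lia.
      left. subst k. rewrite e. auto.
    + specialize (S2 (S n) ltac:(lia)). lia.
Qed.

Lemma Body_xf : forall z, (forall r, act r = true -> (z < tn r \/ tn r + Lam <= z)%Z) -> Body z = xf z.
Proof.
  intros. unfold Body, Gn. destruct (act (nidx z)) eqn:Ha; auto. apply D_out. apply H0. auto.
Qed.

End Body.

Lemma of_nat_le : forall n, (fst (Cantor.of_nat n) <= n /\ snd (Cantor.of_nat n) <= n)%nat.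
Proof.
  intros. pose proof (Cantor.cancel_to_of n). destruct (Cantor.of_nat n) as [a b] eqn:E1.
  pose proof (Cantor.to_nat_non_decreasing a b). simpl. lia.
Qed.

Definition cls (n : nat) : nat := fst (Cantor.of_nat n).
Definition gi (n : nat) : nat := fst (Cantor.of_nat (snd (Cantor.of_nat n))).
Definition blk (qq i m : nat) : nat := Cantor.to_nat (qq, Cantor.to_nat (i, m)).

Lemma gi_le : forall n, (gi n <= n)%nat.
Proof. intros. unfold gi. pose proof (of_nat_le n). pose proof (of_nat_le (snd (Cantor.of_nat n))). lia. Qed.
Lemma cls_blk : forall qq i m, cls (blk qq i m) = qq.
Proof. intros. unfold cls, blk. rewrite Cantor.cancel_of_to. auto. Qed.
Lemma gi_blk : forall qq i m, gi (blk qq i m) = i.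
Proof. intros. unfold gi, blk. rewrite Cantor.cancel_of_to. cbn [fst snd]. rewrite Cantor.cancel_of_to. auto. Qed.
Lemma blk_ge : forall qq i m, (m <= blk qq i m)%nat.
Proof. intros. unfold blk. pose proof (Cantor.to_nat_non_decreasing qq (Cantor.to_nat (i, m))).
  pose proof (Cantor.to_nat_non_decreasing i m). lia. Qed.

Section Constr.
Variables (Pre : nat -> Z -> A) (cq : nat -> Z).
Hypothesis Pre_W : forall qq i, W (Pre qq) (pos i).
Hypothesis Pre_xf : forall qq z, (cq qq <= z)%Z -> Pre qq z = xf z.
Hypothesis cq_nn : forall qq, (0 <= cq qq)%Z.
Hypothesis Pre0 : Pre 0%nat = xf.
Hypothesis cq0 : cq 0%nat = 0%Z.

Definition act (qq : nat) (al : nat -> bool) (n : nat) : bool :=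
  (Nat.eqb (cls n) qq && Z.leb (cq qq + Z.of_nat M) (tn n) &&
   (if Nat.eqb qq 0 then existsb al (seq 0 (S (gi n))) else true))%bool.
Definition bit (al : nat -> bool) (n : nat) : bool := al (gi n).

Definition Zc (qq : nat) (al : nat -> bool) : Z -> A := glue (Pre qq) (Body (act qq al) (bit al)) (cq qq).

Definition val (jj qq : nat) (al : nat -> bool) (z : Z) : A := Zc qq al (z + Z.of_nat jj * P)%Z.
Definition Psi (N : nat) (al : nat -> bool) : pt I A :=
  ptc (val (fst (Cantor.of_nat N)) (snd (Cantor.of_nat N)) al).

Lemma Body_pre : forall qq al z, (z < cq qq + Z.of_nat M)%Z -> Body (act qq al) (bit al) z = xf z.
Proof.
  intros. apply Body_xf. intros r Hr. left. unfold act in Hr.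
  apply andb_prop in Hr. destruct Hr as [Hr _]. apply andb_prop in Hr. destruct Hr as [_ Hr].
  apply Z.leb_le in Hr. lia.
Qed.

Lemma Zc_W : forall qq al i, W (Zc qq al) (pos i).
Proof.
  intros. unfold Zc. apply W_glue; auto. apply Body_W.
  intros z Hz. rewrite Pre_xf by lia. rewrite Body_pre; auto. lia.
Qed.

Lemma W_sh : forall f c s, W f (c + s)%Z -> W (fun z => f (z + s)%Z) c.
Proof. intros f c s (u & i' & Xu & Hu). exists u, i'. split; auto. intros. rewrite <- Hu; auto. f_equal. lia. Qed.

Lemma Psi_X : forall N al, X (Psi N al).
Proof.
  intros. unfold Psi. apply ptc_X. intros i. unfold val. apply W_sh.
  set (jj := fst (Cantor.of_nat N)).
  replace (pos i + Z.of_nat jj * P)%Z with (pos (Nat.iter (jj * p) sh i)).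
  apply Zc_W. rewrite pos_iter. unfold P. lia.
Qed.

Lemma Zc_zero : Zc 0 (fun _ => false) = xf.
Proof.
  apply functional_extensionality. intros z. unfold Zc. unfold glue.
  destruct (z <? cq 0)%Z. rewrite Pre0. auto.
  apply Body_xf. intros r Hr. exfalso. unfold act in Hr.
  assert (forall l : list nat, existsb (fun _ => false) l = false) as HE.
  { induction l; simpl; auto. }
  rewrite HE in Hr. rewrite Bool.andb_false_r in Hr. discriminate.
Qed.

Lemma Psi_x : Psi (Cantor.to_nat (0, 0)%nat) (fun _ => false) = x.
Proof.
  unfold Psi. rewrite Cantor.cancel_of_to. simpl. unfold val. rewrite Zc_zero.
  rewrite <- ptc_xf. unfold ptc. apply functional_extensionality. intros. simpl. rewrite Z.add_0_r. auto.
Qed.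

Lemma Psi_shift : forall N al, shiftn sh p (Psi N al) =
  Psi (Cantor.to_nat (S (fst (Cantor.of_nat N)), snd (Cantor.of_nat N))) al.
Proof.
  intros. apply functional_extensionality. intros i. rewrite shiftn_eq.
  unfold Psi. rewrite Cantor.cancel_of_to. simpl. unfold ptc, val. rewrite pos_iter. f_equal. unfold P. lia.
Qed.


Lemma existsb_ext_in : forall (f g : nat -> bool) l, (forall i, In i l -> f i = g i) -> existsb f l = existsb g l.
Proof. intros f g l. induction l; simpl; intros; auto. rewrite H0 by auto. rewrite IHl; auto. Qed.

Lemma Psi_cont : forall N k, exists m, forall al al', (forall i, (i < m)%nat -> al i = al' i) ->
  agree win k (Psi N al) (Psi N al').
Proof.
  intros N k. set (jj := fst (Cantor.of_nat N)). set (qq := snd (Cantor.of_nat N)).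
  exists (Z.to_nat (Z.of_nat k + Z.of_nat jj * P) + 1)%nat. intros al al' Hal i Hi.
  apply win_iff in Hi. unfold Psi, ptc, val. fold jj qq.
  set (z := (pos i + Z.of_nat jj * P)%Z).
  unfold Zc, glue. destruct (z <? cq qq)%Z; auto.
  unfold Body, Gn. set (n := nidx z). pose proof (nidx_le z). fold n in H0.
  assert (Hn : (n < Z.to_nat (Z.of_nat k + Z.of_nat jj * P) + 1)%nat) by (unfold z in *; lia).
  assert (Hact : act qq al n = act qq al' n).
  { unfold act. destruct (Nat.eqb qq 0); auto. f_equal. apply existsb_ext_in.
    intros i0 Hi0. apply in_seq in Hi0. pose proof (gi_le n). apply Hal. lia. }
  assert (Hbit : bit al n = bit al' n).
  { unfold bit. apply Hal. pose proof (gi_le n). lia. }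
  rewrite Hact, Hbit. auto.
Qed.

Lemma val_eval : forall jj qq al n z, (1 <= n)%nat -> (cq qq <= z + Z.of_nat jj * P)%Z ->
  (tn (n-1) + Lam <= z + Z.of_nat jj * P)%Z -> (z + Z.of_nat jj * P < tn (S n))%Z ->
  val jj qq al z = Gn (act qq al) (bit al) n (z + Z.of_nat jj * P)%Z.
Proof.
  intros. unfold val, Zc. rewrite glue_r by auto. apply Body_local; auto.
Qed.

Lemma Gn_lo : forall ac bt n z, (z < tn n + q)%Z -> Gn ac bt n z = xf z.
Proof. intros. unfold Gn. destruct (ac n); auto. unfold tn in *. apply D_lo. auto. Qed.

Lemma Gn_mid : forall ac bt n z, bt n = true -> (tn n + L0 <= z < tn n + H + P + q)%Z -> Gn ac bt n z = xf z.
Proof. intros. unfold Gn. destruct (ac n); auto. rewrite H0. unfold tn in *. apply D_mid. simpl. lia. Qed.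

Lemma witness : forall jj qq al jj' qq' al' n, (1 <= n)%nat ->
  (tn (n-1) + Lam <= tn n - Z.of_nat (Nat.max jj jj') * P)%Z ->
  (tn n + Lam + Z.of_nat (Nat.max jj jj') * P < tn (S n))%Z ->
  (cq qq <= tn n - Z.of_nat (Nat.max jj jj') * P)%Z ->
  (cq qq' <= tn n - Z.of_nat (Nat.max jj jj') * P)%Z ->
  act qq al n = true ->
  (act qq' al' n = false \/ (jj' < jj)%nat \/ (jj' = jj /\ bit al n = false /\ bit al' n = true)) ->
  exists z, (tn n - Z.of_nat (Nat.max jj jj') * P <= z)%Z /\ val jj qq al z <> val jj' qq' al' z.
Proof.
  intros jj qq al jj' qq' al' n Hn R1 R2 R3 R4 Ha Hcase.
  pose proof Hpos. pose proof L0_pos. pose proof (tn_nn n).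
  assert (Hmx : (Z.of_nat jj * P <= Z.of_nat (Nat.max jj jj') * P /\ Z.of_nat jj' * P <= Z.of_nat (Nat.max jj jj') * P)%Z)
    by (split; apply Z.mul_le_mono_nonneg_r; lia).
  assert (Hq' : (q < L0)%Z) by (unfold L0; lia).
  assert (HLam : (H + P + q < Lam)%Z) by (unfold Lam; lia).
  assert (HH : (L0 < H)%Z) by (unfold H; lia).
  destruct Hcase as [Hb|[Hj|(Hj & Hb1 & Hb2)]].
  - exists (tn n - Z.of_nat jj * P + q)%Z. split. lia.
    rewrite (val_eval jj qq al n) by lia. rewrite (val_eval jj' qq' al' n) by lia.
    unfold Gn. rewrite Ha, Hb.
    replace (tn n - Z.of_nat jj * P + q + Z.of_nat jj * P)%Z with (tn n + q)%Z by lia.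
    replace (tn n - Z.of_nat jj * P + q + Z.of_nat jj' * P)%Z with ((tn n + q) + (Z.of_nat jj' - Z.of_nat jj) * P)%Z by lia.
    rewrite xf_perZ. unfold tn. apply D_q.
  - exists (tn n - Z.of_nat jj * P + q)%Z. split. lia.
    assert (Z.of_nat jj' * P + P <= Z.of_nat jj * P)%Z by nia.
    rewrite (val_eval jj qq al n) by lia. rewrite (val_eval jj' qq' al' n) by lia.
    unfold Gn at 1. rewrite Ha.
    replace (tn n - Z.of_nat jj * P + q + Z.of_nat jj * P)%Z with (tn n + q)%Z by lia.
    rewrite Gn_lo by lia.
    replace (tn n - Z.of_nat jj * P + q + Z.of_nat jj' * P)%Z with ((tn n + q) + (Z.of_nat jj' - Z.of_nat jj) * P)%Z by lia.
    rewrite xf_perZ. unfold tn. apply D_q.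
  - subst jj'. exists (tn n - Z.of_nat jj * P + H + q)%Z. split. lia.
    rewrite (val_eval jj qq al n) by lia. rewrite (val_eval jj qq' al' n) by lia.
    replace (tn n - Z.of_nat jj * P + H + q + Z.of_nat jj * P)%Z with (tn n + H + bP false + q)%Z by (simpl; lia).
    rewrite (Gn_mid (act qq' al') (bit al') n) by (simpl; auto || lia).
    unfold Gn. rewrite Ha, Hb1. unfold tn. apply D_q2.
Qed.

Lemma act_blk : forall qq al i m, (Z.to_nat (cq qq + Z.of_nat M) <= m)%nat ->
  act qq al (blk qq i m) = (if Nat.eqb qq 0 then existsb al (seq 0 (S i)) else true).
Proof.
  intros. unfold act. rewrite cls_blk, gi_blk, Nat.eqb_refl.
  assert (Z.leb (cq qq + Z.of_nat M) (tn (blk qq i m)) = true).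
  { apply Z.leb_le. pose proof (tn_ge (blk qq i m)). pose proof (blk_ge qq i m). pose proof (cq_nn qq). lia. }
  rewrite H1. reflexivity.
Qed.

Lemma act_cls : forall qq al n, cls n <> qq -> act qq al n = false.
Proof. intros. unfold act. apply Nat.eqb_neq in H0. rewrite H0. auto. Qed.

Lemma ex_seq : forall (al : nat -> bool) i, existsb al (seq 0 (S i)) = true <-> exists i', (i' <= i)%nat /\ al i' = true.
Proof.
  intros. rewrite existsb_exists. split; intros (i' & H1 & H2); exists i'; split; auto.
  apply in_seq in H1. lia. apply in_seq. lia.
Qed.

Definition stdiff (jj qq : nat) (al : nat -> bool) (jj' qq' : nat) (al' : nat -> bool) (n : nat) : Prop :=
  act qq al n <> act qq' al' n \/
  (act qq al n = true /\ act qq' al' n = true /\ (jj <> jj' \/ bit al n <> bit al' n)).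

Lemma active_ex : forall qq al m, (Z.to_nat (cq qq + Z.of_nat M) <= m)%nat ->
  (qq <> 0%nat \/ exists i, al i = true) -> exists i, act qq al (blk qq i m) = true.
Proof.
  intros qq al m Hm [Hq0|(i & Hi)].
  - exists 0%nat. rewrite act_blk by auto. apply Nat.eqb_neq in Hq0. rewrite Hq0. auto.
  - exists i. rewrite act_blk by auto. destruct (Nat.eqb qq 0); auto. apply ex_seq. exists i. auto.
Qed.

Lemma stdiff_inf : forall jj qq al jj' qq' al',
  ~ (jj = jj' /\ qq = qq' /\ forall i, al i = al' i) ->
  ~ (qq = 0%nat /\ qq' = 0%nat /\ (forall i, al i = false) /\ (forall i, al' i = false)) ->
  forall N0, exists n, (N0 <= n)%nat /\ stdiff jj qq al jj' qq' al' n.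
Proof.
  intros jj qq al jj' qq' al' Hd Hz N0.
  set (m := (N0 + Z.to_nat (cq qq + Z.of_nat M) + Z.to_nat (cq qq' + Z.of_nat M))%nat).
  assert (Hm1 : (Z.to_nat (cq qq + Z.of_nat M) <= m)%nat) by (unfold m; lia).
  assert (Hm2 : (Z.to_nat (cq qq' + Z.of_nat M) <= m)%nat) by (unfold m; lia).
  assert (HN : forall a b c, (N0 <= blk a b c)%nat \/ (c < m)%nat) by (intros; pose proof (blk_ge a b c); lia).
  assert (HN0 : forall a b, (N0 <= blk a b m)%nat) by (intros; pose proof (blk_ge a b m); unfold m in *; lia).
  unfold stdiff.
  destruct (classic (qq <> 0%nat \/ exists i, al i = true)) as [Ha|Ha].
  - destruct (Nat.eq_dec qq qq') as [<-|Hqq].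
    + destruct (Nat.eq_dec jj jj') as [<-|Hjj].
      * assert (exists i, al i <> al' i) as [i Hi].
        { apply NNPP. intro Hn. apply Hd. split; auto. split; auto. intros i. apply NNPP. intro. apply Hn. eauto. }
        exists (blk qq i m). split; auto. rewrite !act_blk by auto.
        unfold bit. rewrite gi_blk.
        destruct (Nat.eqb qq 0).
        -- destruct (existsb al (seq 0 (S i))) eqn:E1; destruct (existsb al' (seq 0 (S i))) eqn:E2.
           ++ right. auto.
           ++ left. discriminate.
           ++ left. discriminate.
           ++ exfalso. apply Hi.
              assert (al i = false). { destruct (al i) eqn:E3; auto. rewrite <- E1. symmetry. apply ex_seq. eauto. }
              assert (al' i = false). { destruct (al' i) eqn:E3; auto. rewrite <- E2. symmetry. apply ex_seq. eauto. }
              congruence.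
        -- right. auto.
      * destruct (active_ex qq al m Hm1 Ha) as [i Hi]. exists (blk qq i m). split; auto.
        destruct (act qq al' (blk qq i m)) eqn:E1. right. auto. left. rewrite Hi. discriminate.
    + destruct (active_ex qq al m Hm1 Ha) as [i Hi]. exists (blk qq i m). split; auto.
      left. rewrite Hi. rewrite act_cls. discriminate. rewrite cls_blk. auto.
  - assert (qq = 0%nat) by (apply NNPP; intro; apply Ha; auto).
    assert (Hal : forall i, al i = false) by (intros; destruct (al i) eqn:E; auto; exfalso; apply Ha; eauto).
    subst qq.
    assert (Hb : qq' <> 0%nat \/ exists i, al' i = true).
    { apply NNPP. intro Hn. apply Hz. split; auto. split. apply NNPP. intro. apply Hn. auto.
      split; auto. intros. destruct (al' i) eqn:E; auto. exfalso. apply Hn. eauto. }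
    destruct (active_ex qq' al' m Hm2 Hb) as [i Hi]. exists (blk qq' i m). split; auto.
    left. rewrite Hi. destruct (Nat.eq_dec qq' 0) as [->|Hq'].
    + rewrite act_blk by auto. rewrite Nat.eqb_refl.
      assert (existsb al (seq 0 (S i)) = false).
      { destruct (existsb al (seq 0 (S i))) eqn:E; auto. apply ex_seq in E. destruct E as (i' & _ & Hi').
        rewrite Hal in Hi'. discriminate. }
      rewrite H0. discriminate.
    + rewrite act_cls. discriminate. rewrite cls_blk. auto.
Qed.

Lemma differ : forall jj qq al jj' qq' al',
  ~ (jj = jj' /\ qq = qq' /\ forall i, al i = al' i) ->
  ~ (qq = 0%nat /\ qq' = 0%nat /\ (forall i, al i = false) /\ (forall i, al' i = false)) ->
  forall Z0, exists z, (Z0 <= z)%Z /\ val jj qq al z <> val jj' qq' al' z.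
Proof.
  intros jj qq al jj' qq' al' Hd Hz Z0.
  set (JJ := (Z.of_nat (Nat.max jj jj') * P)%Z).
  destruct (stdiff_inf jj qq al jj' qq' al' Hd Hz (Z.to_nat (Lam + JJ + cq qq + cq qq' + Z.abs Z0) + 2))
    as (n & Hn & Hst).
  pose proof Hpos. pose proof L0_pos. pose proof G_ge. pose proof E_pos. pose proof (cq_nn qq). pose proof (cq_nn qq').
  assert (HJJ : (0 <= JJ)%Z) by (unfold JJ; lia).
  assert (HLam : (0 < Lam)%Z) by (unfold Lam, H; lia).
  assert (R1 : (tn (n-1) + Lam <= tn n - JJ)%Z).
  { pose proof (tn_S (n-1)) as T. replace (S (n-1)) with n in T by lia.
    pose proof (G_mul (2 * Z.of_nat (n-1) + 1) ltac:(lia)). lia. }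
  assert (R2 : (tn n + Lam + JJ < tn (S n))%Z).
  { pose proof (tn_S n).
    pose proof (G_mul (2 * Z.of_nat n + 1) ltac:(lia)). lia. }
  assert (R3 : (cq qq + Z.abs Z0 <= tn n - JJ /\ cq qq' <= tn n - JJ)%Z).
  { pose proof (tn_ge n). lia. }
  assert (Hm : Nat.max jj' jj = Nat.max jj jj') by apply Nat.max_comm.
  assert (W1 : act qq al n = true ->
     (act qq' al' n = false \/ (jj' < jj)%nat \/ (jj' = jj /\ bit al n = false /\ bit al' n = true)) ->
     exists z, (Z0 <= z)%Z /\ val jj qq al z <> val jj' qq' al' z).
  { intros Ha Hc. destruct (witness jj qq al jj' qq' al' n) as (z & Hz1 & Hz2); auto; try (fold JJ; lia).
    exists z. split; auto. fold JJ in Hz1. lia. }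
  assert (W2 : act qq' al' n = true ->
     (act qq al n = false \/ (jj < jj')%nat \/ (jj = jj' /\ bit al' n = false /\ bit al n = true)) ->
     exists z, (Z0 <= z)%Z /\ val jj qq al z <> val jj' qq' al' z).
  { intros Ha Hc. destruct (witness jj' qq' al' jj qq al n) as (z & Hz1 & Hz2); auto; try lia; try (rewrite Hm; fold JJ; lia).
    exists z. split; auto. rewrite Hm in Hz1. fold JJ in Hz1. lia. }
  destruct Hst as [Hst|(Ha & Hb & [Hj|Hbit])].
  - destruct (act qq al n) eqn:Ea; destruct (act qq' al' n) eqn:Eb; try congruence.
    + apply W1; auto.
    + apply W2; auto.
  - destruct (lt_eq_lt_dec jj' jj) as [[Hl|Hl]|Hl]. apply W1; auto. lia. apply W2; auto.
  - destruct (Nat.eq_dec jj jj') as [<-|Hj].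
    2:{ destruct (lt_eq_lt_dec jj' jj) as [[Hl|Hl]|Hl]. apply W1; auto. lia. apply W2; auto. }
    destruct (bit al n) eqn:E1; destruct (bit al' n) eqn:E2; try congruence.
    + apply W2; auto.
    + apply W1; auto.
Qed.

Lemma val_xf : forall jj qq al w, (cq qq <= w + Z.of_nat jj * P)%Z ->
  (forall r, (w + Z.of_nat jj * P < tn r \/ tn r + Lam <= w + Z.of_nat jj * P)%Z) ->
  val jj qq al w = xf w.
Proof.
  intros. unfold val, Zc. rewrite glue_r by auto. rewrite Body_xf. apply xf_perZ.
  intros. apply H1.
Qed.

Lemma synd : forall jj qq al jj' qq' al' (k : nat), exists Dd : nat, forall m : nat, exists n : nat,
  (m <= n <= m + Dd)%nat /\
  forall w, (Z.of_nat n - Z.of_nat k < w < Z.of_nat n + Z.of_nat k)%Z -> val jj qq al w = val jj' qq' al' w.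
Proof.
  intros jj qq al jj' qq' al' k.
  pose proof Hpos. pose proof L0_pos. pose proof G_ge. pose proof E_pos. pose proof (cq_nn qq). pose proof (cq_nn qq').
  set (K := Z.of_nat k). set (JJ := (Z.of_nat (Nat.max jj jj') * P)%Z).
  assert (Hmx : (Z.of_nat jj * P <= JJ /\ Z.of_nat jj' * P <= JJ)%Z)
    by (unfold JJ; split; apply Z.mul_le_mono_nonneg_r; lia).
  assert (HLam : (0 < Lam)%Z) by (unfold Lam, H; lia).
  set (Cm := (cq qq + cq qq')%Z). set (R := (Lam + JJ + 2 * K)%Z).
  assert (HK : (0 <= K)%Z) by (unfold K; lia).
  set (r0 := Z.to_nat (R + 1)).
  assert (Hgood : forall n : Z, (Cm + K <= n)%Z -> (forall r, ~ (tn r - JJ - K <= n < tn r + Lam + K)%Z) ->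
     forall w, (n - K < w < n + K)%Z -> val jj qq al w = val jj' qq' al' w).
  { intros n Hn Hr w Hw. rewrite (val_xf jj qq al w), (val_xf jj' qq' al' w); auto; try lia;
    intros r; specialize (Hr r); lia. }
  exists (Z.to_nat (Cm + K) + Z.to_nat (tn r0 + Lam + K) + Z.to_nat R + 1)%nat.
  intros m.
  set (m1 := Z.max (Z.of_nat m) (Z.max (Cm + K) (tn r0 + Lam + K))).
  pose proof (tn_nn r0).
  destruct (classic (exists r, (tn r - JJ - K <= m1 < tn r + Lam + K)%Z)) as [(r & Hr)|Hno].
  - assert (Hr0 : (r0 < r)%nat).
    { destruct (Nat.lt_ge_cases r0 r) as [Hc|Hc]; auto. pose proof (tn_le r r0 Hc). lia. }
    exists (Z.to_nat (tn r + Lam + K)). split. lia.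
    intros w Hw. rewrite Z2Nat.id in Hw by (pose proof (tn_nn r); lia).
    apply (Hgood (tn r + Lam + K)%Z); auto. lia.
    intros r' Hr'.
    destruct (lt_eq_lt_dec r' r) as [[Hl|Hl]|Hl].
    + pose proof (tn_le r' r ltac:(lia)). lia.
    + subst. lia.
    + pose proof (tn_lt r r' Hl).
      pose proof (G_mul (2 * Z.of_nat r + 1) ltac:(lia)). lia.
  - exists (Z.to_nat m1). split. lia.
    intros w Hw. rewrite Z2Nat.id in Hw by lia.
    apply (Hgood m1); auto. lia.
    intros r Hr. apply Hno. eauto.
Qed.

Hypothesis Pre_dense : forall (k : nat) u, X u -> exists qq, (Z.of_nat k <= cq qq)%Z /\
  forall i, win k i -> Pre qq (pos i) = u i.

Lemma Psi_zero : forall N al, snd (Cantor.of_nat N) = 0%nat -> (forall i, al i = false) -> Psi N al = x.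
Proof.
  intros N al H1 H2. assert (al = fun _ => false) by (apply functional_extensionality; auto). subst al.
  unfold Psi. rewrite H1. unfold val. rewrite Zc_zero. rewrite <- ptc_xf. unfold ptc.
  apply functional_extensionality. intros. apply xf_perZ.
Qed.

Lemma Psi_at : forall N al z, (0 <= z)%Z -> Psi N al (ofZ z) = val (fst (Cantor.of_nat N)) (snd (Cantor.of_nat N)) al z.
Proof. intros. unfold Psi, ptc. rewrite pos_ofZ; auto. Qed.

Lemma differ_pt : forall N al N' al', Psi N al <> Psi N' al' -> forall Z0, exists z, (Z0 <= z)%Z /\
  val (fst (Cantor.of_nat N)) (snd (Cantor.of_nat N)) al z <> val (fst (Cantor.of_nat N')) (snd (Cantor.of_nat N')) al' z.
Proof.
  intros N al N' al' Hne. apply differ.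
  - intros (H1 & H2 & H3). apply Hne. assert (al = al') by (apply functional_extensionality; auto). subst al'.
    unfold Psi. rewrite H1, H2. auto.
  - intros (H1 & H2 & H3 & H4). apply Hne. rewrite Psi_zero, Psi_zero; auto.
Qed.

Lemma assembly : exists S : pset I A,
    (forall y, S y -> X y) /\ dense_in win X S /\ mycielski win S /\
    S x /\ (forall y, S y -> S (shiftn sh p y)) /\
    synd_scrambled sh win S.
Proof.
  exists (fun y => exists N al, y = Psi N al).
  split; [|split; [|split; [|split; [|split]]]].
  - intros y (N & al & ->). apply Psi_X.
  - intros U HU (u & Xu & Uu). destruct (HU u Uu) as [k Hk].
    destruct (Pre_dense k u Xu) as (qq & Hc & Hpre).
    exists (Psi (Cantor.to_nat (0%nat, qq)) (fun _ => false)). split. eauto.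
    apply Hk. intros i Hi. unfold Psi, ptc, val. rewrite Cantor.cancel_of_to. cbn [fst snd].
    unfold Zc. rewrite glue_l. rewrite Z.add_0_r. symmetry. apply Hpre; auto.
    apply win_iff in Hi. lia.
  - exists (fun N y => exists al, y = Psi N al). split.
    + intros N. apply cantor_img. apply Psi_cont.
      intros al al' He i. apply NNPP. intro Hi.
      destruct (differ (fst (Cantor.of_nat N)) (snd (Cantor.of_nat N)) al (fst (Cantor.of_nat N)) (snd (Cantor.of_nat N)) al')
        with (Z0 := 0%Z) as (z & Hz & Hd).
      * intros (_ & _ & H3). auto.
      * intros (_ & _ & H3 & H4). apply Hi. rewrite H3, H4. auto.
      * apply Hd. rewrite <- !Psi_at by auto. rewrite He. auto.
    + intros y. split. intros (N & al & ->). eauto. intros (N & al & ->). eauto.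
  - exists (Cantor.to_nat (0%nat, 0%nat)), (fun _ => false). symmetry. apply Psi_x.
  - intros y (N & al & ->). rewrite Psi_shift. eauto.
  - split.
    + exists (Psi (Cantor.to_nat (0%nat, 0%nat)) (fun _ => false)), (Psi (Cantor.to_nat (0%nat, 0%nat)) (fun _ => true)).
      split. eauto. split. eauto.
      intro He. destruct (differ 0 0 (fun _ => false) 0 0 (fun _ => true)) with (Z0 := 0%Z) as (z & Hz & Hd).
      * intros (_ & _ & H3). specialize (H3 0%nat). discriminate.
      * intros (_ & _ & H3 & H4). specialize (H4 0%nat). discriminate.
      * apply Hd. pose proof (Psi_at (Cantor.to_nat (0%nat, 0%nat)) (fun _ => false) z Hz).
        pose proof (Psi_at (Cantor.to_nat (0%nat, 0%nat)) (fun _ => true) z Hz).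
        rewrite Cantor.cancel_of_to in H0, H1. cbn [fst snd] in H0, H1. rewrite <- H0, <- H1, He. auto.
    + intros a b (Na & ala & ->) (Nb & alb & ->) Hab. split.
      * intros k T HT.
        destruct (synd (fst (Cantor.of_nat Na)) (snd (Cantor.of_nat Na)) ala (fst (Cantor.of_nat Nb)) (snd (Cantor.of_nat Nb)) alb k)
          as [Dd HD].
        destruct (HT (S Dd)) as [m0 Hm0].
        destruct (HD m0) as (n & Hn & Hw).
        exists n. split.
        -- intros i Hi. rewrite !shiftn_eq. unfold Psi, ptc. rewrite pos_iter. apply Hw.
           apply win_iff in Hi. lia.
        -- replace n with (m0 + (n - m0))%nat by lia. apply Hm0. lia.
      * intros Has. destruct (Has 1%nat) as [N0 HN0].
        destruct (differ_pt Na ala Nb alb Hab (Z.of_nat N0)) as (z & Hz & Hd).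
        apply Hd. specialize (HN0 (Z.to_nat z) ltac:(lia) (ofZ 0%Z)).
        rewrite !shiftn_eq in HN0. unfold Psi, ptc in HN0. rewrite pos_iter, pos_ofZ in HN0 by lia.
        rewrite Z2Nat.id in HN0 by lia. simpl in HN0. apply HN0. apply win_iff. rewrite pos_ofZ; lia.
Qed.
End Constr.
End Blocks.

Variables (lA : list A) (HlA : forall a, In a lA).

Lemma main_gen : exists S : pset I A,
    (forall y, S y -> X y) /\ dense_in win X S /\ mycielski win S /\
    S x /\ (forall y, S y -> S (shiftn sh p y)) /\
    synd_scrambled sh win S.
Proof.
  destruct marker_exists as (B & Lm & q & BW & Blo & Bhi & Hq & Bq & Bbq).
  set (d0 := x (ofZ 0%Z)). set (b := length lA).
  set (patt := fun (k c : nat) (i : I) => nth ((c / b ^ Z.to_nat (pos i + Z.of_nat k)) mod b)%nat lA d0).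
  assert (HP : forall qq, exists PC : (Z -> A) * Z,
   (forall i, W (fst PC) (pos i)) /\ (forall z, (snd PC <= z)%Z -> fst PC z = xf z) /\ (0 <= snd PC)%Z /\
   (qq = 0%nat -> fst PC = xf) /\
   (forall code, qq = S code ->
      (exists v, X v /\ agree win (fst (Cantor.of_nat code)) (patt (fst (Cantor.of_nat code)) (snd (Cantor.of_nat code))) v) ->
      (Z.of_nat (fst (Cantor.of_nat code)) <= snd PC)%Z /\
      forall i, win (fst (Cantor.of_nat code)) i -> fst PC (pos i) = patt (fst (Cantor.of_nat code)) (snd (Cantor.of_nat code)) i)).
  { intros [|code].
    - exists (xf, 0%Z). simpl. split. intros; apply W_xf. split; auto. split. lia. split; auto. intros; discriminate.
    - set (k := fst (Cantor.of_nat code)). set (c := snd (Cantor.of_nat code)).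
      destruct (classic (exists v, X v /\ agree win k (patt k c) v)) as [(v & Xv & Hv)|Hno].
      + destruct (prefix_exists v k Xv) as (Pr & cc & H1 & H2 & H3 & H4). exists (Pr, cc). simpl.
        split; auto. split; auto. split. lia. split. intros; discriminate.
        intros code' Hc' _. injection Hc' as <-. fold k c. split; auto. intros i Hi. rewrite H4 by auto.
        symmetry. apply Hv. auto.
      + destruct (prefix_exists x k Xx) as (Pr & cc & H1 & H2 & H3 & H4). exists (Pr, cc). simpl.
        split; auto. split; auto. split. lia. split. intros; discriminate.
        intros code' Hc' Hex. injection Hc' as <-. fold k c in Hex. contradiction. }
  pose proof (fun qq => proj2_sig (constructive_indefinite_description _ (HP qq))) as Hf.
  set (f := fun qq => proj1_sig (constructive_indefinite_description _ (HP qq))).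
  fold f in Hf.
  apply (assembly B Lm q BW Blo Bhi Hq Bq Bbq (fun qq => fst (f qq)) (fun qq => snd (f qq))).
  - intros. apply Hf.
  - intros. apply Hf. auto.
  - intros. apply Hf.
  - apply Hf. auto.
  - intros k u Xu.
    assert (Hb : (0 < b)%nat). { unfold b. destruct lA. destruct (HlA d0). simpl. lia. }
    assert (Hg : forall e : nat, exists n, (n < b)%nat /\ nth n lA d0 = u (ofZ (Z.of_nat e - Z.of_nat k)%Z)).
    { intros. apply In_nth. auto. }
    set (g := fun e => proj1_sig (constructive_indefinite_description _ (Hg e))).
    assert (Hg2 : forall e, (g e < b)%nat /\ nth (g e) lA d0 = u (ofZ (Z.of_nat e - Z.of_nat k)%Z)).
    { intros. exact (proj2_sig (constructive_indefinite_description _ (Hg e))). }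
    destruct (digits_exist b g Hb (fun e => proj1 (Hg2 e)) (2 * k)) as (c & _ & Hc).
    assert (Hpatt : forall i, win k i -> patt k c i = u i).
    { intros i Hi. apply win_iff in Hi. unfold patt. rewrite Hc by lia.
      destruct (Hg2 (Z.to_nat (pos i + Z.of_nat k))) as [_ ->]. f_equal.
      rewrite <- (ofZ_pos i) at 2. f_equal. lia. }
    exists (S (Cantor.to_nat (k, c))).
    destruct (Hf (S (Cantor.to_nat (k, c)))) as (_ & _ & _ & _ & H5).
    specialize (H5 _ eq_refl). rewrite Cantor.cancel_of_to in H5. cbn [fst snd] in H5.
    assert (Hex : exists v, X v /\ agree win k (patt k c) v).
    { exists u. split; [auto|]. intros i Hi. apply Hpatt. auto. }
    destruct (H5 Hex) as [H7 H8].
    split; auto. intros i Hi. rewrite H8 by auto. apply Hpatt. auto.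
Qed.
End Per.
End WithA.
End Gen.

Theorem gen_thm : forall (I : Type) (sh : I -> I) (win : nat -> I -> Prop) (pos : I -> Z) (ofZ : Z -> I),
  (forall i, pos (sh i) = (pos i + 1)%Z) -> (forall i, ofZ (pos i) = i) ->
  (forall z, (0 <= z)%Z -> pos (ofZ z) = z) ->
  (forall k i, win k i <-> (- Z.of_nat k < pos i < Z.of_nat k)%Z) ->
  thm4p7_for sh win.
Proof.
  intros I sh win pos ofZ H1 H2 H3 H4. intros A' [lA HlA] X HXs [F HF] Hinf Hmix x p Xx Hp Hper.
  eapply main_gen; eauto.
Qed.

Theorem theorem4p7 :
  thm4p7_for S win1 /\ thm4p7_for Z.succ win2.
Proof.
  split.
  - apply (gen_thm nat S win1 Z.of_nat Z.to_nat).
    + intros. lia.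
    + intros. apply Nat2Z.id.
    + intros. apply Z2Nat.id. auto.
    + intros. unfold win1. lia.
  - apply (gen_thm Z Z.succ win2 (fun z => z) (fun z => z)).
    + intros. lia.
    + auto.
    + auto.
    + intros. unfold win2. lia.
Qed.
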